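(* For the modular data of the quantum double of $S_3$, the modular invariants $Z_6$, $Z_{11}$, $Z_{14}$, $Z_{15}$ and the transposes $Z_{41}$, $Z_{51}$ are nimless.
   Context: Primaries $0,\dots,7$, all self-conjugate, with $S=\frac16\begin{pmatrix}1&1&2&2&2&2&3&3\\1&1&2&2&2&2&-3&-3\\2&2&4&-2&-2&-2&0&0\\2&2&-2&4&-2&-2&0&0\\2&2&-2&-2&-2&4&0&0\\2&2&-2&-2&4&-2&0&0\\3&-3&0&0&0&0&3&-3\\3&-3&0&0&0&0&-3&3\end{pmatrix}$, $T=\mathrm{diag}(1,1,1,1,e^{2\pi i/3},e^{4\pi i/3},1,-1)$, fusion coefficients $N_{\lambda\mu}^\nu=\sum_\rho S_{\lambda\rho}S_{\mu\rho}\overline{S_{\nu\rho}}/S_{0\rho}$. Matrices are written as $\sum Z_{\lambda\mu}\chi_\lambda\chi_\mu^*$; for linear forms $s=\sum a_\lambda\chi_\lambda$, $t=\sum b_\mu\chi_\mu$, $st^*$ is the matrix $(a_\lambda b_\mu)$. $Z_6=|\chi_0+\chi_1|^2+|\chi_2|^2+|\chi_3|^2+2|\chi_4|^2+2|\chi_5|^2+\chi_2\chi_3^*+\chi_3\chi_2^*$. With $s_1=\chi_0+\chi_1+\chi_2+\chi_3$, $s_4=\chi_0+\chi_2+\chi_6$, $s_5=\chi_0+\chi_3+\chi_6$: $Z_{ij}=s_is_j^*$. A nimrep of dimension $n$: non-negative integer $n\times n$ matrices $G_\lambda$ with $G_0=I$, $G_{\bar\lambda}=G_\lambda^t$, $G_\lambda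 G_\mu=\sum_\nu N_{\lambda\mu}^\nu G_\nu$. $\mathrm{Exp}(Z)$ is the multiset with $Z_{\mu\mu}$ copies of $\mu$. A nimrep matches $Z$ if $n=\mathrm{Tr}\,Z$ and the $G_\lambda$ are simultaneously unitarily diagonalisable with joint eigenvalues $(S_{\lambda\mu}/S_{0\mu})_\lambda$, $\mu$ running through $\mathrm{Exp}(Z)$ with multiplicity. $Z$ is nimless if no matching nimrep exists. *)

(* Defs.v *)
From HB Require Import structures.
From mathcomp Require Import all_boot all_order all_algebra all_field.
Set Implicit Arguments. Unset Strict Implicit. Unset Printing Implicit Defensive.
Import Order.TTheory GRing.Theory Num.Theory.
Local Open Scope ring_scope.

(* 6 * S, row by row *)
Definition S6_entries : seq (seq int) :=
  [:: [:: 1; 1; 2; 2; 2; 2; 3; 3];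
      [:: 1; 1; 2; 2; 2; 2; -3; -3];
      [:: 2; 2; 4; -2; -2; -2; 0; 0];
      [:: 2; 2; -2; 4; -2; -2; 0; 0];
      [:: 2; 2; -2; -2; -2; 4; 0; 0];
      [:: 2; 2; -2; -2; 4; -2; 0; 0];
      [:: 3; -3; 0; 0; 0; 0; 3; -3];
      [:: 3; -3; 0; 0; 0; 0; -3; 3]]%Z.

Definition Smat : 'M[algC]_8 :=
  \matrix_(i < 8, j < 8) ((nth [::] S6_entries i)`_j)%:~R / 6%:R.

(* The T-matrix diag(1,1,1,1,e^{2 pi i/3},e^{4 pi i/3},1,-1);
   w is the primitive cube root of unity e^{2 pi i/3} = (-1 + i sqrt 3)/2. *)
Definition omega3 : algC := (-1 + 'i * sqrtC 3%:R) / 2%:R.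
Definition Tmat : 'M[algC]_8 :=
  diag_mx (\row_(j < 8) nth 0 [:: 1; 1; 1; 1; omega3; omega3 ^+ 2; 1; -1] j).

(* Fusion coefficients (Verlinde formula) *)
Definition fusion (l m v : 'I_8) : algC :=
  \sum_(r < 8) Smat l r * Smat m r * (Smat v r)^* / Smat ord0 r.

(* Charge conjugation: all primaries are self-conjugate *)
Definition conjP (l : 'I_8) : 'I_8 := l.

Definition toC {n : nat} (A : 'M[nat]_n) : 'M[algC]_n :=
  map_mx (fun k : nat => k%:R) A.

Definition nimrep (n : nat) (G : 'I_8 -> 'M[nat]_n) : Prop :=
  [/\ toC (G ord0) = 1%:M,
      forall l, G (conjP l) = (G l)^T
    & forall l m, toC (G l) *m toC (G m) = \sum_(v < 8) fusion l m v *: toC (G v)].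

Definition adjC {n : nat} (U : 'M[algC]_n) : 'M[algC]_n := (map_mx (fun x => x^*) U)^T.

Definition unitary_mx {n : nat} (U : 'M[algC]_n) : Prop :=
  U *m adjC U = 1%:M /\ adjC U *m U = 1%:M.

Definition trZ (Z : 'M[nat]_8) : nat := \sum_(i < 8) Z i i.

(* G matches Z: n = Tr Z and the G_l are simultaneously unitarily
   diagonalisable with joint eigenvalues (S_{l mu}/S_{0 mu})_l, mu running
   through Exp(Z) with multiplicity (the enumeration e lists Exp(Z):
   each mu occurs exactly Z_{mu mu} times). *)
Definition matches (Z : 'M[nat]_8) (n : nat) (G : 'I_8 -> 'M[nat]_n) : Prop :=
  n = trZ Z /\
  exists (U : 'M[algC]_n) (e : 'I_n -> 'I_8),
    [/\ forall mu : 'I_8, #|[set i | e i == mu]| = Z mu mu,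
        unitary_mx U
      & forall l : 'I_8,
          adjC U *m toC (G l) *m U
          = diag_mx (\row_(i < n) (Smat l (e i) / Smat ord0 (e i)))].

Definition nimless (Z : 'M[nat]_8) : Prop :=
  ~ exists (n : nat) (G : 'I_8 -> 'M[nat]_n), nimrep G /\ matches Z G.

Definition mx_of_seqs (s : seq (seq nat)) : 'M[nat]_8 :=
  \matrix_(i < 8, j < 8) nth 0%N (nth [::] s i) j.

(* For linear forms s, t: the matrix s t^* = (a_l b_m) *)
Definition outer (a b : seq nat) : 'M[nat]_8 :=
  \matrix_(i < 8, j < 8) (nth 0%N a i * nth 0%N b j)%N.

(* Z_6 = |x0+x1|^2 + |x2|^2 + |x3|^2 + 2|x4|^2 + 2|x5|^2 + x2 x3^* + x3 x2^* *)
Definition Z6 : 'M[nat]_8 := mx_of_seqs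
  [:: [:: 1; 1; 0; 0; 0; 0; 0; 0];
      [:: 1; 1; 0; 0; 0; 0; 0; 0];
      [:: 0; 0; 1; 1; 0; 0; 0; 0];
      [:: 0; 0; 1; 1; 0; 0; 0; 0];
      [:: 0; 0; 0; 0; 2; 0; 0; 0];
      [:: 0; 0; 0; 0; 0; 2; 0; 0];
      [:: 0; 0; 0; 0; 0; 0; 0; 0];
      [:: 0; 0; 0; 0; 0; 0; 0; 0]]%N.

Definition s1 : seq nat := [:: 1; 1; 1; 1; 0; 0; 0; 0]%N.
Definition s4 : seq nat := [:: 1; 0; 1; 0; 0; 0; 1; 0]%N.
Definition s5 : seq nat := [:: 1; 0; 0; 1; 0; 0; 1; 0]%N.

Definition Z11 : 'M[nat]_8 := outer s1 s1.
Definition Z14 : 'M[nat]_8 := outer s1 s4.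
Definition Z15 : 'M[nat]_8 := outer s1 s5.
Definition Z41 : 'M[nat]_8 := outer s4 s1.
Definition Z51 : 'M[nat]_8 := outer s5 s1.

(* Main.v *)
Require Import Defs.
From mathcomp Require Import all_boot all_order all_algebra all_field.
From HB Require Import structures.
From mathcomp Require Import ring zify.
Set Implicit Arguments. Unset Strict Implicit. Unset Printing Implicit Defensive.
Import Order.TTheory GRing.Theory Num.Theory.

Lemma sum_ge1 n (F : 'I_n -> nat) a : (F a <= \sum_l F l)%N.
Proof. by rewrite (bigD1 a) //= leq_addr. Qed.

Lemma sum_ge2 n (F : 'I_n -> nat) a b : a != b -> (F a + F b <= \sum_l F l)%N.
Proof.
move=> hab; rewrite (bigD1 a) //= (bigD1 b) /=; last by rewrite eq_sym.
by rewrite addnA leq_addr.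
Qed.

Lemma exists_pos n (P : pred 'I_n) (F : 'I_n -> nat) :
  (0 < \sum_(l | P l) F l)%N -> exists l, P l && (0 < F l)%N.
Proof.
move=> h; case: (pickP (fun l => P l && (0 < F l)%N)) => [l hl|hn].
  by exists l.
move: h; rewrite big1 // => i Pi; move: (hn i); rewrite Pi /= lt0n.
by move/negbFE/eqP.
Qed.

Lemma comb n (G : 'M[nat]_n) : (forall i j, G i j = G j i) ->
  (forall i j, \sum_k G i k * G k j = G i j + 2 * (i == j))%N ->
  forall i, ~~ odd (G i i).
Proof.
move=> Hs H i.
have Hii := H i i; rewrite eqxx muln1 in Hii.
have hd : (G i i * G i i <= G i i + 2)%N.
  by rewrite -Hii (sum_ge1 (fun k => G i k * G k i) i).
have hle : (G i i <= 2)%N.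
  case: (leqP (G i i) 2) => // h3.
  have : (3 * G i i <= G i i * G i i)%N by rewrite leq_mul2r h3 orbT.
  lia.
suff hne : G i i != 1%N.
  by move: hle hne; case: (G i i) => [|[|[|m]]].
apply/eqP => h1.
rewrite (bigD1 i) //= h1 in Hii.
have hs' : (\sum_(k | k != i) G i k * G k i = 2)%N by move: Hii; rewrite mul1n => /addnI.
have [j /andP[hji hj]] := exists_pos (P := fun k => k != i)
   (F := fun k => G i k * G k i) (ltac:(rewrite hs'; done)).
rewrite (bigD1 j) //= in hs'.
have Gij : G i j = 1%N by rewrite (Hs j i) in hj hs'; nia.
rewrite (Hs j i) Gij in hs'.
have hs2 : (0 < \sum_(k | (k != i) && (k != j)) G i k * G k i)%N.
  by move: hs'; rewrite mul1n add1n => -[->].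
have [k /andP[/andP[hki hkj] hk]] := exists_pos hs2.
have Hij := H i j. rewrite Gij in Hij.
have Hij' : i != j by rewrite eq_sym.
rewrite (negbTE Hij') in Hij.
have := sum_ge2 (fun l => G i l * G l j) (ltac:(by rewrite eq_sym) : i != k).
rewrite Hij h1 Gij => hkj0.
have hk1 : (G i k * G k i <= 1)%N.
  move: hs'; rewrite (bigD1 k) /=; last by rewrite hki hkj.
  lia.
have Gik : G i k = 1%N by rewrite (Hs k i) in hk hk1; nia.
have Gkj : G k j = 0%N by rewrite Gik in hkj0; lia.
have Hjk := H j k. rewrite (negbTE (ltac:(by rewrite eq_sym) : j != k)) (Hs j k) Gkj in Hjk.
have := sum_ge1 (fun l => G j l * G l k) i.
by rewrite Hjk (Hs j i) Gij Gik.
Qed.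

Local Open Scope ring_scope.

Lemma Smat_E (l mu : 'I_8) : Smat l mu = ((nth [::] S6_entries l)`_mu)%:~R / 6%:R.
Proof.
rewrite /Smat.
have -> : (6%:R : 'M[algC]_8) = (6%:R)%:M.
  by apply/matrixP => i j; rewrite !mxE; case: (i == j) => /=; rewrite ?mulr0n ?addr0.
have -> : ((6%:R)%:M : 'M[algC]_8)^-1 = invmx (6%:R)%:M by [].
by rewrite invmx_scalar -mulmxE mul_mx_scalar !mxE mulrC.
Qed.

Definition fr (l mu : 'I_8) : algC := Smat l mu / Smat ord0 mu.

Lemma alg_part n (U : 'M[algC]_n) (d : 'rV[algC]_n) (X : 'M[algC]_n) :
  unitary_mx U -> adjC U *m X *m U = diag_mx d ->
  (forall i, d 0 i ^+ 2 = d 0 i + 2%:R) ->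
  X *m X = X + (2%:R)%:M /\ \tr X = \sum_i d 0 i.
Proof.
move=> [HU1 HU2] HD Hd.
have HX : X = U *m diag_mx d *m adjC U.
  by rewrite -HD !mulmxA HU1 mul1mx -mulmxA HU1 mulmx1.
have HD2 : diag_mx d *m diag_mx d = diag_mx d + (2%:R)%:M.
  rewrite mulmx_diag; apply/matrixP => i j; rewrite !mxE.
  by case: (i == j); rewrite ?mulr1n ?mulr0n ?addr0 // -expr2 Hd.
have HX2 : X *m X = X + (2%:R)%:M.
  rewrite {1 2}HX -!mulmxA (mulmxA (adjC U)) HU2 mul1mx (mulmxA (diag_mx d)) HD2.
  rewrite mulmxDl mulmxDr !mulmxA mul_mx_scalar -scalemxAl HU1.
  by rewrite scalemx1 -HX.
split => //.
rewrite HX mxtrace_mulC mulmxA HU2 mul1mx mxtrace_diag.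
by [].
Qed.

Lemma key (Z : 'M[nat]_8) (l : 'I_8) (t : nat) :
  (forall mu : 'I_8, Z mu mu != 0%N -> fr l mu ^+ 2 = fr l mu + 2%:R) ->
  \sum_(mu < 8) (Z mu mu)%:R * fr l mu = t%:R -> odd t -> nimless Z.
Proof.
move=> Hf Hsum Ht [n [G [[_ Hsym _] [_ [U [e [Hcnt HU HD]]]]]]].
have Hd : forall i, (\row_(i < n) (Smat l (e i) / Smat ord0 (e i))) 0 i ^+ 2
    = (\row_(i < n) (Smat l (e i) / Smat ord0 (e i))) 0 i + 2%:R.
  move=> i; rewrite mxE; apply: Hf; rewrite -Hcnt.
  apply/eqP => /eqP; rewrite cards_eq0 => /eqP h0.
  have : i \in [set i0 | e i0 == e i] by rewrite inE.
  by rewrite h0 inE.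
have [HX2 Htr] := alg_part HU (HD l) Hd.
have HS : forall i j, G l i j = G l j i.
  move=> i j; have := Hsym l; rewrite /conjP => h.
  by rewrite {1}h mxE.
have HN : forall i j, (\sum_k G l i k * G l k j = G l i j + 2 * (i == j))%N.
  move=> i j; move/matrixP: HX2 => /(_ i j); rewrite !mxE => h.
  apply/eqP; rewrite -(eqr_nat algC); apply/eqP.
  rewrite natr_sum natrD natrM mulr_natr -h.
  by apply: eq_bigr => k _; rewrite !mxE natrM.
have Htr2 : (\sum_i G l i i)%N = t.
  apply/eqP; rewrite -(eqr_nat algC); apply/eqP.
  rewrite natr_sum -Hsum.
  transitivity (\tr (toC (G l))).
    by rewrite /mxtrace; apply: eq_bigr => i _; rewrite mxE.
  rewrite Htr.
  under eq_bigr do rewrite mxE.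
  rewrite (partition_big e xpredT) //=.
  apply: eq_bigr => mu _.
  rewrite (eq_bigr (fun _ => fr l mu)); last by move=> i /eqP <-.
  rewrite (eq_bigl (fun i => i \in [set i0 | e i0 == mu])); last by move=> i; rewrite inE.
  by rewrite sumr_const Hcnt mulr_natl.
have Hev := comb HS HN.
have : ~~ odd (\sum_i G l i i)%N.
  apply: (big_ind (fun x => ~~ odd x)) => //.
    by move=> x y; rewrite oddD; case: (odd x); case: (odd y).
by rewrite Htr2 Ht.
Qed.

Ltac side_f Zdef :=
  move=> [[|[|[|[|[|[|[|[|m]]]]]]]] hm] //;
  rewrite /Zdef ?/outer ?/mx_of_seqs mxE /= => // _;
  rewrite /fr !Smat_E /=; field; done.

Ltac side_sum Zdef :=
  rewrite !big_ord_recr big_ord0 /= /Zdef ?/outer ?/mx_of_seqs !mxE /= /fr !Smat_E /=; field; done.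

Theorem proposition6p1 :
  nimless Z6 /\ nimless Z11 /\ nimless Z14 /\ nimless Z15 /\ nimless Z41 /\ nimless Z51.
Proof.
split; [|split; [|split; [|split; [|split]]]].
- apply: (key (l := @Ordinal 8 2 isT) (t := 1%N)) => //.
  + side_f Z6.
  + side_sum Z6.
- apply: (key (l := @Ordinal 8 2 isT) (t := 5%N)) => //.
  + side_f Z11.
  + side_sum Z11.
- apply: (key (l := @Ordinal 8 3 isT) (t := 1%N)) => //.
  + side_f Z14.
  + side_sum Z14.
- apply: (key (l := @Ordinal 8 2 isT) (t := 1%N)) => //.
  + side_f Z15.
  + side_sum Z15.
- apply: (key (l := @Ordinal 8 3 isT) (t := 1%N)) => //.
  + side_f Z41.
  + side_sum Z41.
- apply: (key (l := @Ordinal 8 2 isT) (t := 1%N)) => //.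
  + side_f Z51.
  + side_sum Z51.
Qed.
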